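(* Let $S$ be a set and $s,s':I_m\to S$ be mirrored, and assume $(m_1,m_2)$ is a coincidence of $(s,s')$, with $m'=m_1+m_2<m$. Define $s_0,s_0':I_{m-m'}\to S$ by $s_0(j)=s(j+m_1)$ and $s_0'(j)=s'(j+m_1)$ (the restrictions of $s,s'$ to $I_m'=\{m_1+1,\ldots,m-m_2\}$, reindexed). Then $s_0$ and $s_0'$ are mirrored (as sequences of length $m-m'$).
   Context: $\mathcal{S}_k$ is the group of bijections of $I_k=\{1,\ldots,k\}$, with $\sigma\circ\tau$ meaning apply $\tau$ first. $\mathscr{T}_k=\{\sigma\in\mathcal{S}_k \mid \exists t:\ \sigma(1)>\cdots>\sigma(t)=1,\ \sigma(t)<\sigma(t+1)<\cdots<\sigma(k)\}$. $\mathcal{S}_k$ acts on sequences $s:I_k\to S$ by $\sigma s=s\circ\sigma^{-1}$. Two sequences $s,s':I_k\to S$ are mirrored if for every $\sigma\in\mathscr{T}_k$ there is $\sigma'\in\mathscr{T}_k$ with $\sigma s=\sigma's'$, and for every $\tau'\in\mathscr{T}_k$ there is $\tau\in\mathscr{T}_k$ with $\tau's'=\tau s$. For $s,s':I_m\to S$ and $A=s(1)$, a coincidence of $(s,s')$ is a pair $(m_1,m_2)$ of integers with $m_1>0$, $m_2\ge 0$, $m_1+m_2<m$, such that $s(i)=s'(i)=A$ for all $i\in\{1,\ldots,m_1\}\cup\{m-m_2+1,\ldots,m\}$, and $s(m_1+1)\ne A$, $s'(m_1+1)\ne A$, $s(m-m_2)\ne A$, $s'(m-m_2)\ne A$. 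*)

(* Defs.v *)
(* Indices are 0-based: position i of I_k = {1..k} is the
   ordinal i-1 : 'I_k. *)
From mathcomp Require Import all_boot all_fingroup.
Set Implicit Arguments. Unset Strict Implicit. Unset Printing Implicit Defensive.

Definition inT (k : nat) (sigma : 'S_k) : Prop :=
  exists t : 'I_k,
    (sigma t : nat) = 0 /\
    (forall i j : 'I_k, i < j -> j <= t -> sigma j < sigma i) /\
    (forall i j : 'I_k, t <= i -> i < j -> sigma i < sigma j).

Definition act_seq (S : Type) (k : nat) (sigma : 'S_k) (s : 'I_k -> S) : 'I_k -> S :=
  fun i => s ((sigma^-1)%g i).

Definition mirrored (S : Type) (k : nat) (s s' : 'I_k -> S) : Prop :=
  (forall sigma : 'S_k, inT sigma ->
     exists2 sigma' : 'S_k, inT sigma' & forall i, act_seq sigma s i = act_seq sigma' s' i) /\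
  (forall tau' : 'S_k, inT tau' ->
     exists2 tau : 'S_k, inT tau & forall i, act_seq tau' s' i = act_seq tau s i).

(* (m1, m2) is a coincidence of (s, s'), with A = s(1) (the 0-th ordinal). *)
Definition coincidence (S : Type) (m : nat) (s s' : 'I_m -> S) (m1 m2 : nat) : Prop :=
  0 < m1 /\ m1 + m2 < m /\
  forall i0 : 'I_m, (i0 : nat) = 0 ->
    (forall i : 'I_m, (i < m1) || (m - m2 <= i) -> s i = s i0 /\ s' i = s i0) /\
    (forall i : 'I_m, (i : nat) = m1 -> s i <> s i0 /\ s' i <> s i0) /\
    (forall i : 'I_m, (i : nat) = (m - m2).-1 -> s i <> s i0 /\ s' i <> s i0).

Lemma restr_lt (m m1 m2 : nat) (j : 'I_(m - (m1 + m2))) : j + m1 < m.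
Proof.
case: j => j /= Hj.
have H : j < m - m1 by apply: leq_trans Hj _; rewrite subnDA leq_subr.
by rewrite addnC -ltn_subRL.
Qed.

Definition restr (S : Type) (m m1 m2 : nat) (s : 'I_m -> S) : 'I_(m - (m1 + m2)) -> S :=
  fun j => s (Ordinal (restr_lt j)).

(* Main.v *)
Require Import Defs.
From mathcomp Require Import all_boot all_fingroup.
From mathcomp Require Import zify.
Set Implicit Arguments. Unset Strict Implicit.

Section Ext.
Variables (m m1 m2 : nat).
Hypothesis hm : m1 + m2 < m.
Local Notation k0 := (m - (m1 + m2)).
Variable s0 : 'S_k0.

Definition natp (j : nat) : nat :=
  if insub j is Some o then val (s0 o) else 0.

Lemma natpE (o : 'I_k0) : natp o = s0 o.
Proof. by rewrite /natp valK. Qed.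

Definition gext (i : nat) :=
  if i < m1 then k0 + (m1 - 1 - i) else if i < m1 + k0 then natp (i - m1) else i.

Lemma gext_cases i : i < m ->
  (i < m1 /\ gext i = k0 + (m1 - 1 - i)) \/
  (exists o : 'I_k0, (o : nat) + m1 = i /\ gext i = s0 o) \/
  (m1 + k0 <= i /\ gext i = i).
Proof.
move=> hi; rewrite /gext.
have [h1|h1] := ltnP i m1; first by left.
have [h2|h2] := ltnP i (m1 + k0); last by right; right.
right; left.
have ho : i - m1 < k0 by lia.
exists (Ordinal ho); split => /=; first lia.
by rewrite -natpE.
Qed.

Lemma gext_lt i : i < m -> gext i < m.
Proof.
move=> hi; case: (gext_cases hi) => [[h1 ->]|[[o [ho ->]]|[h1 ->]]] //; first lia.
have := ltn_ord (s0 o); lia.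
Qed.

Lemma gext_inj i j : i < m -> j < m -> gext i = gext j -> i = j.
Proof.
move=> hi hj.
case: (gext_cases hi) => [[h1 ->]|[[o [ho ->]]|[h1 ->]]];
case: (gext_cases hj) => [[h2 ->]|[[o' [ho' ->]]|[h2 ->]]];
  try (have := ltn_ord o); try (have := ltn_ord o'); try (have := ltn_ord (s0 o)); try (have := ltn_ord (s0 o')); try lia.
intros ? ? ? ? e; move: e => /val_inj/perm_inj e; subst o'; lia.
Qed.

Definition gfun (i : 'I_m) : 'I_m := Ordinal (gext_lt (ltn_ord i)).

Lemma gfun_inj : injective gfun.
Proof.
move=> i j /(congr1 val) /= H; apply/val_inj.
exact: gext_inj (ltn_ord i) (ltn_ord j) H.
Qed.

Definition sext : 'S_m := perm gfun_inj.

Lemma sextE (i : 'I_m) : nat_of_ord (sext i) = gext i.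
Proof. by rewrite permE. Qed.

Lemma sext_inT : inT s0 -> inT sext.
Proof.
move=> [t0 [ht0 [hdec hinc]]].
have ht : m1 + t0 < m by have := ltn_ord t0; lia.
exists (Ordinal ht); split.
  rewrite sextE /gext /=.
  have [h|h] := ltnP (m1 + t0) m1; first lia.
  have [h'|h'] := ltnP (m1 + t0) (m1 + k0); last by have := ltn_ord t0; lia.
  by rewrite (_ : m1 + t0 - m1 = t0) ?natpE // ; lia.
split.
- move=> i j /= hij hjt; rewrite !sextE; have := ltn_ord t0.
  case: (gext_cases (ltn_ord i)) => [[h1 ->]|[[o [ho ->]]|[h1 ->]]];
  case: (gext_cases (ltn_ord j)) => [[h2 ->]|[[o' [ho' ->]]|[h2 ->]]];
    try (have := ltn_ord o); try (have := ltn_ord o'); try (have := ltn_ord (s0 o)); try (have := ltn_ord (s0 o')); try lia.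
  intros; apply: hdec => /=; lia.
- move=> i j /= hij hjt; rewrite !sextE; have := ltn_ord t0.
  case: (gext_cases (ltn_ord i)) => [[h1 ->]|[[o [ho ->]]|[h1 ->]]];
  case: (gext_cases (ltn_ord j)) => [[h2 ->]|[[o' [ho' ->]]|[h2 ->]]];
    try (have := ltn_ord o); try (have := ltn_ord o'); try (have := ltn_ord (s0 o)); try (have := ltn_ord (s0 o')); try lia.
  intros; apply: hinc => /=; lia.
Qed.

Lemma sext_inv_mid (p : 'I_m) (hp : p < k0) :
  nat_of_ord ((sext^-1)%g p) = nat_of_ord ((s0^-1)%g (Ordinal hp)) + m1.
Proof.
set o := (s0^-1)%g (Ordinal hp).
have ho : nat_of_ord o + m1 < m by have := ltn_ord o; lia.
have e : sext (Ordinal ho) = p.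
  apply/val_inj => /=; rewrite sextE /gext /=.
  have [h|h] := ltnP (o + m1) m1; first lia.
  have [h'|h'] := ltnP (o + m1) (m1 + k0); last by have := ltn_ord o; lia.
  by rewrite (_ : o + m1 - m1 = o) ?natpE ?permKV //; lia.
by rewrite -e permK.
Qed.

Lemma sext_inv_out (p : 'I_m) : k0 <= p ->
  let i := (sext^-1)%g p in (i < m1) || (m - m2 <= i).
Proof.
move=> hp /=; set i := (sext^-1)%g p.
have e : nat_of_ord (sext i) = p by rewrite permKV.
rewrite sextE in e.
case: (gext_cases (ltn_ord i)) e => [[h1 _]|[[o [ho ->]]|[h1 _]]] e.
- by rewrite h1.
- have := ltn_ord (s0 o); lia.
- apply/orP; right; lia.
Qed.

End Ext.

Lemma half (S : Type) (m m1 m2 : nat) (hm : m1 + m2 < m) (s s' : 'I_m -> S) (A : S) :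
  (forall i : 'I_m, (i < m1) || (m - m2 <= i) -> s i = A) ->
  (forall i : 'I_m, (i : nat) = m1 -> s' i <> A) ->
  (forall i : 'I_m, (i : nat) = (m - m2).-1 -> s' i <> A) ->
  (forall sigma : 'S_m, inT sigma ->
     exists2 sigma' : 'S_m, inT sigma' & forall i, act_seq sigma s i = act_seq sigma' s' i) ->
  forall sigma0 : 'S_(m - (m1 + m2)), inT sigma0 ->
     exists2 sigma0' : 'S_(m - (m1 + m2)), inT sigma0' &
       forall i, act_seq sigma0 (@restr S m m1 m2 s) i = act_seq sigma0' (@restr S m m1 m2 s') i.
Proof.
move=> hA h1 h2 hmir s0 hs0.
have [sg hsg heq] := hmir _ (sext_inT hm hs0).
set k0 := m - (m1 + m2).
have hout : forall i : 'I_m, k0 <= sg i -> s' i = A.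
  move=> i hi.
  have := heq (sg i); rewrite /act_seq permK => <-.
  apply: hA; exact: (sext_inv_out hm s0 hi).
have hmid : forall i : 'I_m, m1 <= i -> i < m - m2 -> sg i < k0.
  move=> i hi1 hi2; rewrite ltnNge; apply/negP => hk.
  case: hsg => t [ht [hdec hinc]].
  have [hit|hti] := leqP i t.
  - have hj : m1 < m by lia.
    case: (ltngtP m1 i) => hji.
    + have := hdec (Ordinal hj) i hji hit => hlt.
      by apply: (h1 (Ordinal hj) erefl); apply: hout; lia.
    + lia.
    + have e : Ordinal hj = i by apply/val_inj.
      by apply: (h1 (Ordinal hj) erefl); rewrite e; apply: hout.
  - have hj : (m - m2).-1 < m by lia.
    case: (ltngtP i (m - m2).-1) => hji.
    + have := hinc i (Ordinal hj) (ltnW hti) hji => hlt.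
      by apply: (h2 (Ordinal hj) erefl); apply: hout; lia.
    + lia.
    + have e : Ordinal hj = i by apply/val_inj.
      by apply: (h2 (Ordinal hj) erefl); rewrite e; apply: hout.
pose f (o : 'I_k0) : 'I_k0 :=
  Ordinal (hmid (Ordinal (restr_lt o)) ltac:(simpl; lia) ltac:(simpl; have := ltn_ord o; unfold k0 in *; lia)).
have finj : injective f.
  move=> o o' /(congr1 val) /= /val_inj /perm_inj /(congr1 val) /= e.
  apply/val_inj; exact: (addIn e).
pose s0' := perm finj.
have key : forall (p : 'I_k0) (hp : p < m),
    nat_of_ord ((sg^-1)%g (Ordinal hp)) = nat_of_ord ((s0'^-1)%g p) + m1.
  move=> p hp; set q := (s0'^-1)%g p.
  have e : sg (Ordinal (restr_lt q)) = Ordinal hp.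
    apply/val_inj => /=.
    have := congr1 val (permKV s0' p); rewrite permE /= => ->; done.
  by rewrite -e permK.
exists s0'.
- have k0pos : 0 < k0 by lia.
  set o0 := (s0'^-1)%g (Ordinal k0pos).
  have e0 : nat_of_ord (s0' o0) = 0 by rewrite permKV.
  case: hsg => t [ht [hdec hinc]].
  have et : nat_of_ord t = o0 + m1.
    rewrite permE /= in e0.
    have : sg t = sg (Ordinal (restr_lt o0)) by apply/val_inj; rewrite /= ht e0.
    by move/perm_inj => ->.
  exists o0; split => //; split.
  + move=> i j hij hj; rewrite !permE /=.
    apply: hdec => /=; first by rewrite ltn_add2r.
    by rewrite et leq_add2r.
  + move=> i j hij hj; rewrite !permE /=.
    apply: hinc => /=; first by rewrite et leq_add2r.
    by rewrite ltn_add2r.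
- move=> i.
  have hp : (i : nat) < m by have := ltn_ord i; lia.
  have := heq (Ordinal hp); rewrite /act_seq /restr => hh.
  transitivity (s ((sext hm s0)^-1%g (Ordinal hp))).
    congr s; apply/val_inj; rewrite /= (sext_inv_mid hm s0 (p:=Ordinal hp) (ltn_ord i)).
    by congr (nat_of_ord ((s0^-1)%g _) + _); apply/val_inj.
  rewrite hh; congr s'; apply/val_inj; exact: key.
Qed.

Theorem mainTheorem13 (S : Type) (m : nat) (s s' : 'I_m -> S) (m1 m2 : nat) :
  mirrored s s' -> coincidence s s' m1 m2 -> m1 + m2 < m ->
  mirrored (@restr S m m1 m2 s) (@restr S m m1 m2 s').
Proof.
move=> [hm1 hm2] [hpos [hlt hc]] hm.
have h0 : 0 < m by lia.
have [hA [hB hC]] := hc (Ordinal h0) erefl.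
split.
- apply: (half hm (A := s (Ordinal h0))).
  + by move=> i /hA [].
  + by move=> i /hB [].
  + by move=> i /hC [].
  + exact: hm1.
- apply: (half hm (A := s (Ordinal h0))).
  + by move=> i /hA [].
  + by move=> i /hB [].
  + by move=> i /hC [].
  + exact: hm2.
Qed.
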